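(* Let $v\equiv 9\pmod{18}$ and let $(\mathbb{Z}_v,\mathcal{B})$ be a cyclic $\mathrm{STS}(v)$ (with cyclic automorphism $i\mapsto i+1 \bmod v$). Then $\mathcal{B}$ has a full orbit of Type $3$.
   Context: A Steiner triple system $\mathrm{STS}(v)$ is a pair $(X,\mathcal{B})$ with $|X|=v$ and $\mathcal{B}$ a collection of 3-subsets of $X$ such that every 2-subset lies in exactly one block. It is cyclic if (after relabeling) $X=\mathbb{Z}_v$ and the map $\alpha: i\mapsto i+1 \pmod v$ maps blocks to blocks. The blocks are then partitioned into orbits under the group generated by $\alpha$; an orbit with $v$ blocks is a full orbit. For $v\equiv 3\pmod 6$ there is, besides full orbits, exactly one short orbit, namely the orbit of $\{0,v/3,2v/3\}$, of size $v/3$. When $3\mid v$, an orbit is of Type $i$ ($i=1,2,3$) if every block in it contains elements of exactly $i$ distinct residue classes modulo $3$ (this is the same for all blocks of an orbit). *)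

(* Defs.v *)
From mathcomp Require Import all_boot.
Unset Strict Implicit. Unset Printing Implicit Defensive.

(* Points of Z_v are represented by 'I_v (residues 0..v-1); blocks are
   subsets of 'I_v, a design is a set of blocks. *)

Definition is_STS (v : nat) (B : {set {set 'I_v}}) : Prop :=
  (forall b, b \in B -> #|b| = 3) /\
  (forall x y : 'I_v, x != y -> exists! b : {set 'I_v}, [/\ b \in B, x \in b & y \in b]).

Definition shift_block (v k : nat) (b : {set 'I_v}) : {set 'I_v} :=
  [set x : 'I_v | [exists y in b, (x : nat) == (y + k) %% v]].

Definition is_cyclic (v : nat) (B : {set {set 'I_v}}) : Prop :=
  forall b, b \in B -> @shift_block v 1 b \in B.

Definition block_orbit (v : nat) (b : {set 'I_v}) : {set {set 'I_v}} :=
  [set @shift_block v k b | k : 'I_v].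

Definition full_orbit (v : nat) (b : {set 'I_v}) : Prop :=
  #|@block_orbit v b| = v.

Definition block_type (v : nat) (b : {set 'I_v}) : nat :=
  size (undup [seq (val x) %% 3 | x <- enum b]).

(* Main.v *)
Require Import Defs.
From mathcomp Require Import all_boot zify.

Lemma count_res n k : k < 3 -> \sum_(0 <= j < 3 * n) (k != j %% 3 : nat) = 2 * n.
Proof.
move=> hk; elim: n => [|n IH]; first by rewrite muln0 big_geq.
have -> : 3 * n.+1 = (3 * n).+2.+1 by lia.
rewrite !big_nat_recr //= IH.
have h0 : (3 * n) %% 3 = 0 by lia.
have h1 : (3 * n).+1 %% 3 = 1 by lia.
have h2 : (3 * n).+2 %% 3 = 2 by lia.
rewrite h0 h1 h2.
clear IH; by case: k hk => [|[|[|k]]] //= _; lia.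
Qed.

Lemma four_cnt (a b c : nat) :
  ~~ uniq [:: a; b; c] ->
  4 %| 2 * ((a != b) + (a != c) + (b != c)).
Proof.
rewrite /= !inE andbT.
case hab: (a == b); case hac: (a == c); case hbc: (b == c) => //=.
all: move: hab hac hbc; try (move/eqP ->); try (move/eqP->); rewrite ?eqxx //.

all: try (by move=> ->). by move=> hab /eqP E1 /eqP E2; rewrite E1 E2 eqxx in hab.
Qed.

Lemma addmod v a b c e : a %% v = c %% v -> b %% v = e %% v -> (a + b) %% v = (c + e) %% v.
Proof. by move=> h1 h2; rewrite -modnDm h1 h2 modnDm. Qed.

Arguments addmod {v a b c e}.

Lemma cancelmod v p m : p %% v = (p + m) %% v -> v %| m.
Proof.
move=> h; have : (p + 0 == p + m %[mod v]) by rewrite addn0 h.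
by rewrite eqn_modDl mod0n eq_sym.
Qed.

Lemma sum_lemma (x y z ux uy uz k d : nat) :
  x %% 3 <> y %% 3 -> x %% 3 <> z %% 3 -> y %% 3 <> z %% 3 ->
  (x + k) %% 3 = (ux + (k + d)) %% 3 ->
  (y + k) %% 3 = (uy + (k + d)) %% 3 ->
  (z + k) %% 3 = (uz + (k + d)) %% 3 ->
  [\/ ux = x, ux = y | ux = z] ->
  [\/ uy = x, uy = y | uy = z] ->
  [\/ uz = x, uz = y | uz = z] ->
  ux + uy + uz = x + y + z.
Proof.
move=> h1 h2 h3 ex ey ez hx hy hz.
case: hx => ?; case: hy => ?; case: hz => ?; subst; lia.
Qed.

Lemma ux_lemma (x y z ux k d : nat) :
  x %% 3 <> y %% 3 -> x %% 3 <> z %% 3 -> 3 %| d ->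
  (x + k) %% 3 = (ux + (k + d)) %% 3 ->
  [\/ ux = x, ux = y | ux = z] -> ux = x.
Proof. move=> h1 h2 h3 ex hx; case: hx => ?; subst; lia. Qed.

Lemma ar (a b c p q r K D : nat) : p + q + r = a + b + c ->
    p + (K + D) + (q + (K + D)) + (r + (K + D)) = a + K + (b + K) + (c + K) + 3 * D.
Proof. lia. Qed.

Lemma noteq v (b : {set 'I_v}) (x y z : 'I_v) (k k' : 'I_v) :
  enum b = [:: x; y; z] -> uniq [:: val x %% 3; val y %% 3; val z %% 3] ->
  9 %| v -> k < k' -> shift_block v k b = shift_block v k' b -> False.
Proof.
move=> E U h9 hkk heq.
set d := k' - k.
have hk' : (k' : nat) = k + d by rewrite /d; lia.
have dlt : d < v by have := ltn_ord k'; rewrite /d; lia.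
have dpos : 0 < d by rewrite /d; lia.
have vpos : 0 < v by apply: (leq_ltn_trans (leq0n _) (ltn_ord k)).
have h3v : 3 %| v by apply: dvdn_trans h9.
have m3 : forall a c, a %% v = c %% v -> a %% 3 = c %% 3.
  by move=> a c h; rewrite -(modn_dvdm a h3v) h modn_dvdm.
have memb : forall u : 'I_v, u \in b -> [\/ val u = x, val u = y | val u = z].
  by move=> u; rewrite -mem_enum E !inE => /or3P [/eqP->|/eqP->|/eqP->];
     [apply: Or31|apply: Or32|apply: Or33].
have step : forall w : 'I_v, w \in b ->
    exists2 u : 'I_v, u \in b & (w + k) %% v = (u + k') %% v.
  move=> w wb.
  pose o := Ordinal (ltn_pmod (w + k) vpos).
  have : o \in shift_block v k b.
    by rewrite inE; apply/existsP; exists w; rewrite wb /= eqxx.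
  rewrite heq inE => /existsP [u /andP [ub /eqP e]].
  by exists u.
have inb : forall w, w \in [:: x; y; z] -> w \in b by move=> w; rewrite -E mem_enum.
have [ux uxb ex] := step x (inb x (mem_head _ _)).
have [uy uyb ey] := step y (inb y ltac:(by rewrite !inE eqxx orbT)).
have [uz uzb ez] := step z (inb z ltac:(by rewrite !inE eqxx !orbT)).
move: U; rewrite /= !inE negb_or andbT => /andP [/andP [nxy nxz] nyz].
move/eqP: nxy => nxy; move/eqP: nxz => nxz; move/eqP: nyz => nyz.
have rx := m3 _ _ ex; have ry := m3 _ _ ey; have rz := m3 _ _ ez.
rewrite hk' in rx ry rz ex ey ez.
have [hx [hy hz]] := (memb _ uxb, (memb _ uyb, memb _ uzb)).
have hsum := sum_lemma _ _ _ _ _ _ _ _ nxy nxz nyz rx ry rz hx hy hz.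
have hs := addmod (addmod ex ey) ez.
have h3d : v %| 3 * d.
  apply: (cancelmod _ (x + k + (y + k) + (z + k))).
  rewrite hs; congr (_ %% _).
  exact: ar _ _ _ _ _ _ _ _ hsum.
have : 9 %| 3 * d by apply: dvdn_trans h3d.
rewrite (_ : 9 = 3 * 3) // dvdn_pmul2l // => d3.
have hux := ux_lemma _ _ _ _ _ _ nxy nxz d3 rx hx.
rewrite hux in ex.
have vd : v %| d by apply: (cancelmod _ (x + k)); rewrite ex addnA.
by have := dvdn_leq dpos vd; rewrite leqNgt dlt.
Qed.

Definition rr {v} (x : 'I_v) := val x %% 3.
Definition cnt {v} (b : {set 'I_v}) := \sum_(i in b) \sum_(j in b) (rr i != rr j : nat).

Lemma cnt_triple v (b : {set 'I_v}) x y z : enum b = [:: x; y; z] ->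
  cnt b = 2 * ((rr x != rr y) + (rr x != rr z) + (rr y != rr z)).
Proof.
move=> E; rewrite /cnt -big_enum E !big_cons big_nil.
rewrite -!big_enum E !big_cons !big_nil !eqxx.
rewrite [rr y == rr x]eq_sym [rr z == rr x]eq_sym [rr z == rr y]eq_sym.
rewrite /=; lia.
Qed.

Lemma total v (B : {set {set 'I_v}}) : is_STS v B ->
  \sum_(i : 'I_v) \sum_(j : 'I_v) (rr i != rr j : nat) = \sum_(b in B) cnt b.
Proof.
move=> [_ hs].
have key : forall i j : 'I_v, (rr i != rr j : nat) =
   \sum_(b in B) (if (i \in b) && (j \in b) then (rr i != rr j : nat) else 0).
  move=> i j; case: (eqVneq (rr i) (rr j)) => [e|ne].
    by rewrite big1 // => b _; case: ifP.
  have nij : i != j by apply: contra ne => /eqP ->.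
  have [b0 [[b0B ib0 jb0] u0]] := hs i j nij.
  rewrite (bigD1 b0) //= ib0 jb0 /= big1 ?addn0 // => b /andP [bB nb].
  case: ifP => // /andP [ib jb]; exfalso.
  by move: nb; rewrite -(u0 b) ?eqxx.
rewrite (eq_bigr (fun i : 'I_v => \sum_(j : 'I_v) \sum_(b in B)
   (if (i \in b) && (j \in b) then (rr i != rr j : nat) else 0))); last first.
  by move=> i _; apply: eq_bigr => j _; exact: key.
under eq_bigr do rewrite exchange_big.
rewrite exchange_big; apply: eq_bigr => b _.
rewrite /cnt [RHS]big_mkcond; apply: eq_bigr => i _.
case: (i \in b) => /=; first by rewrite [RHS]big_mkcond.
by rewrite big1.
Qed.

Lemma enum3 v (b : {set 'I_v}) : #|b| = 3 -> exists x y z, enum b = [:: x; y; z].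
Proof.
rewrite cardE; case E: (enum b) => [|x [|y [|z [|w s]]]] //= _.
by exists x, y, z.
Qed.

Arguments enum3 {v b}.
Arguments cnt_triple {v b x y z}.
Arguments noteq {v b x y z k k'}.
Arguments four_cnt {a b c}.
Arguments total {v B}.

Theorem mainTheorem3 (v : nat) (B : {set {set 'I_v}}) :
  v %% 18 = 9 -> is_STS v B -> is_cyclic v B ->
  exists2 b, b \in B & full_orbit v b /\ block_type v b = 3.
Proof.
move=> h18 hsts _.
have [hs3 _] := hsts.
have hv : v = 18 * (v %/ 18) + 9 by lia.
set q := v %/ 18 in hv.
have h9 : 9 %| v by rewrite hv; apply: dvdn_add => //; rewrite (_ : 18 = 9 * 2) // -mulnA dvdn_mulr.
have inner : forall i : 'I_v, \sum_(j : 'I_v) (rr i != rr j : nat) = 2 * (6 * q + 3).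
  move=> i; have := count_res (6 * q + 3) (i %% 3) (ltn_pmod i (isT : 0 < 3)).
  rewrite (_ : 3 * (6 * q + 3) = v); last by rewrite hv; lia.
  by rewrite big_mkord.
have tot : \sum_(i : 'I_v) \sum_(j : 'I_v) (rr i != rr j : nat) = v * (2 * (6 * q + 3)).
  by rewrite (eq_bigr _ (fun i _ => inner i)) sum_nat_const card_ord.
case: (boolP [exists b in B, uniq [seq rr i | i <- enum b]]) =>
    [/existsP [b /andP [bB Pb]]|none].
  have [x [y [z E]]] := enum3 (hs3 b bB).
  have Pb' : uniq [:: val x %% 3; val y %% 3; val z %% 3] by move: Pb; rewrite E.
  exists b => //; split.
    rewrite /full_orbit /block_orbit card_imset ?card_ord //.
    move=> k k' heq; apply: val_inj; case: (ltngtP k k') => // h; exfalso.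
      exact: noteq E Pb' h9 h heq.
    exact: noteq E Pb' h9 h (esym heq).
  rewrite /block_type E.
  have -> : [seq val i %% 3 | i <- [:: x; y; z]] = [:: val x %% 3; val y %% 3; val z %% 3] by [].
  by rewrite (undup_id Pb').
exfalso.
have : 4 %| \sum_(b in B) cnt b.
  apply: dvdn_sum => b bB.
  have [x [y [z E]]] := enum3 (hs3 b bB).
  rewrite (cnt_triple E); apply: four_cnt.
  move/existsPn: none => /(_ b); rewrite bB /= E.
  by [].
rewrite -(total hsts) tot hv.
rewrite (_ : (18 * q + 9) * (2 * (6 * q + 3)) = 4 * (54 * q * q + 54 * q + 13) + 2); last by nia.
by rewrite dvdn_addr ?dvdn_mulr.
Qed.
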